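(* Let $(K,d_K)$ be an acyclic graded-commutative dg-ring and let $(A,d_A)$ be a dg-Azumaya algebra of the second kind over $(K,d_K)$. Then $(A,d_A)$ is a dg-Azumaya algebra of the first kind, i.e. $\ker(d_A)$ is graded-Azumaya over $\ker(d_K)$; in particular $\ker(d_A)\otimes_{\ker(d_K)}\ker(d_A)^{op}\cong\mathrm{End}_{\ker(d_K),graded}(\ker(d_A))$.
   Context: Dg-algebra: $\mathbb Z$-graded algebra with degree-$1$ map $d$, $d^2=0$, $d(ab)=d(a)b+(-1)^{|a|}a\,d(b)$. Acyclic: $H(K,d_K)=0$. Graded-commutative: $xy=(-1)^{|x||y|}yx$. Graded centre $Z_{gr}(A)$: spanned by homogeneous $z$ with $za=(-1)^{|z||a|}az$. Dg-algebra over $(K,d_K)$: dg-algebra with a degree-$0$ graded ring homomorphism $K\to Z_{gr}(A)$ commuting with differentials. $A^{op}$: product $b\cdot_{op}a=(-1)^{|a||b|}ab$. For graded-commutative $R$, a graded $R$-algebra $A$ is graded-Azumaya if it is a faithfully projective graded $R$-module, $Z_{gr}(A)=R$, and $A\otimes_RA^{op}\to\mathrm{End}_{R,graded}(A)$, $a\otimes b\mapsto(x\mapsto(-1)^{|b||x|}axb)$, is an isomorphism. $(A,d_A)$ is dg-Azumaya of the second kind if $A$ is graded-Azumaya over $K$; of the first kind if $\ker(d_A)$ is graded-Azumaya over $\ker(d_K)$. *)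

(* Defs.v *)
(* Z-graded rings are represented internally: a ring A together
   with homogeneous-component projections pi : int -> A -> A. Sub-(graded) rings
   such as ker(d) are represented by boolean predicates on the ambient ring. *)
From HB Require Import structures.
From mathcomp Require Import all_boot all_order all_algebra.
From Stdlib Require Import ClassicalEpsilon.
Set Implicit Arguments. Unset Strict Implicit. Unset Printing Implicit Defensive.
Import Order.TTheory GRing.Theory Num.Theory.
Local Open Scope ring_scope.

Definition ksign (R : pzRingType) (n m : int) : R :=
  (-1) ^+ (odd (absz n) && odd (absz m)).

Definition homog (A : pzRingType) (pi : int -> A -> A) (n : int) (x : A) : Prop :=
  pi n x = x.

Definition is_grading (A : pzRingType) (pi : int -> A -> A) : Prop :=
  [/\ forall n x y, pi n (x + y) = pi n x + pi n y,
      forall m n x, pi m (pi n x) = (if m == n then pi n x else 0),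
      forall x, exists s : seq int, uniq s /\ x = \sum_(k <- s) pi k x,
      homog pi 0 1 &
      forall m n x y, homog pi m x -> homog pi n y -> homog pi (m + n) (x * y)].

Definition gsupp (A : pzRingType) (pi : int -> A -> A) (x : A) : seq int :=
  epsilon (inhabits [::])
    (fun s : seq int => uniq s /\ x = \sum_(k <- s) pi k x).

Definition dg_ring (A : pzRingType) (pi : int -> A -> A) (d : A -> A) : Prop :=
  [/\ forall x y, d (x + y) = d x + d y,
      forall x, d (d x) = 0,
      forall n x, homog pi n x -> homog pi (n + 1) (d x) &
      forall n a b, homog pi n a ->
        d (a * b) = d a * b + (-1) ^+ (odd (absz n)) * (a * d b)].

Definition acyclic (A : pzRingType) (d : A -> A) : Prop :=
  forall x, d x = 0 -> exists y, d y = x.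

Definition graded_commutative (A : pzRingType) (pi : int -> A -> A) : Prop :=
  forall m n x y, homog pi m x -> homog pi n y -> x * y = ksign A m n * (y * x).

Definition grcentral (A : pzRingType) (pi : int -> A -> A) (SA : pred A) (z : A) : Prop :=
  forall n m a, SA a -> homog pi m a -> pi n z * a = ksign A n m * (a * pi n z).

Definition kerd (A : pzRingType) (d : A -> A) : pred A := fun x => d x == 0.

Definition dg_algebra_over (K A : pzRingType) (piK : int -> K -> K) (piA : int -> A -> A)
  (dK : K -> K) (dA : A -> A) (iota : {rmorphism K -> A}) : Prop :=
  [/\ forall n r, homog piK n r -> homog piA n (iota r),
      forall r, dA (iota r) = iota (dK r) &
      forall r, grcentral piA predT (iota r)].

Section GradedAzumaya.
Variables (K A : pzRingType) (piK : int -> K -> K) (piA : int -> A -> A)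
  (SK : pred K) (SA : pred A) (iota : {rmorphism K -> A}).

(* SA is a faithfully projective graded SK-module (action r.x = iota r * x):
   f.g. projective via a graded dual basis (direct summand of a graded free module
   (+)_i SK(-n_i)), and faithful. *)
Definition gr_fg_projective : Prop :=
  exists (k : nat) (e : 'I_k -> A) (dg : 'I_k -> int) (f : 'I_k -> A -> K),
  [/\ forall i, SA (e i) /\ homog piA (dg i) (e i),
      forall i x, SA x -> SK (f i x),
      (forall i x y, SA x -> SA y -> f i (x + y) = f i x + f i y) /\
      (forall i r x, SK r -> SA x -> f i (iota r * x) = r * f i x),
      forall i m x, SA x -> homog piA m x -> homog piK (m - dg i) (f i x) &
      forall x, SA x -> x = \sum_(i < k) iota (f i x) * e i].

Definition gr_faithful : Prop :=
  forall r, SK r -> (forall x, SA x -> iota r * x = 0) -> r = 0.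

Definition glin (n : int) (f : A -> A) : Prop :=
  [/\ forall x, ~~ SA x -> f x = 0,
      forall x, SA x -> SA (f x),
      forall x y, SA x -> SA y -> f (x + y) = f x + f y,
      forall k x, SA x -> homog piA k x -> homog piA (k + n) (f x) &
      forall p r x, SK r -> homog piK p r -> SA x ->
        f (iota r * x) = ksign A n p * (iota r * f x)].

Definition gend (f : A -> A) : Prop :=
  exists (k : nat) (dg : 'I_k -> int) (fs : 'I_k -> A -> A),
    (forall i, glin (dg i) (fs i)) /\ forall x, f x = \sum_(i < k) fs i x.

Definition twist (n : int) (x : A) : A :=
  \sum_(k <- gsupp piA x) ksign A n k * piA k x.

(* the image of a (x) b : x |-> (-1)^{|b||x|} a x b, extended biadditively *)
Definition azphi (a b : A) : A -> A :=
  fun x => if SA x then \sum_(n <- gsupp piA b) a * twist n x * piA n b else 0.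

(* The map SA (x)_SK SA^op -> End_gr(SA), a(x)b |-> azphi a b, is well defined
   (SK-balanced, biadditive, valued in End_gr) and an isomorphism; the tensor
   product is given by its universal property. *)
Definition tensor_end_iso : Prop :=
  [/\ forall a b, SA a -> SA b -> gend (azphi a b),
      (forall a a' b, SA a -> SA a' -> SA b -> azphi (a + a') b = (fun x => azphi a b x + azphi a' b x)) /\
      (forall a b b', SA a -> SA b -> SA b' -> azphi a (b + b') = (fun x => azphi a b x + azphi a b' x)),
      forall a r b, SA a -> SK r -> SA b -> azphi (a * iota r) b = azphi a (iota r * b) &
      forall (G : zmodType) (beta : A -> A -> G),
        (forall a a' b, SA a -> SA a' -> SA b -> beta (a + a') b = beta a b + beta a' b) ->
        (forall a b b', SA a -> SA b -> SA b' -> beta a (b + b') = beta a b + beta a b') ->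
        (forall a r b, SA a -> SK r -> SA b -> beta (a * iota r) b = beta a (iota r * b)) ->
        exists h : (A -> A) -> G,
          [/\ forall f g, gend f -> gend g -> h (fun x => f x + g x) = h f + h g,
              forall a b, SA a -> SA b -> h (azphi a b) = beta a b &
              forall h' : (A -> A) -> G,
                (forall f g, gend f -> gend g -> h' (fun x => f x + g x) = h' f + h' g) ->
                (forall a b, SA a -> SA b -> h' (azphi a b) = beta a b) ->
                forall f, gend f -> h' f = h f]].

Definition graded_azumaya : Prop :=
  [/\ gr_fg_projective /\ gr_faithful,
      (* Z_gr(SA) = SK via iota *)
      forall r, SK r -> SA (iota r) /\ grcentral piA SA (iota r),
      forall r, SK r -> iota r = 0 -> r = 0,
      forall z, SA z -> grcentral piA SA z -> exists2 r, SK r & iota r = z &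
      tensor_end_iso].

End GradedAzumaya.

(* Main.v *)
Require Import Defs.
From HB Require Import structures.
From mathcomp Require Import all_boot all_order all_algebra ring.
From Stdlib Require Import ClassicalEpsilon FunctionalExtensionality.
Set Implicit Arguments. Unset Strict Implicit. Unset Printing Implicit Defensive.
Import Order.TTheory GRing.Theory Num.Theory.
Local Open Scope ring_scope.

Lemma key_oddB (a b : nat) : odd `|a%:Z - b%:Z| = odd a (+) odd b.
Proof.
  case: (leqP b a) => h.
    by rewrite subzn // absz_nat oddB.
  by rewrite -opprB (subzn (ltnW h)) abszN absz_nat (oddB (ltnW h)) addbC.
Qed.

Lemma odd_abszD (m n : int) : odd `|m + n| = odd `|m| (+) odd `|n|.
Proof.
case: m => a; case: n => b.
- by rewrite -PoszD absz_nat oddD.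
- by rewrite NegzE key_oddB.
- by rewrite NegzE addrC key_oddB addbC.
- by rewrite !NegzE -opprD !abszN -PoszD !absz_nat oddD.
Qed.

Section Signs.
Variable R : pzRingType.
Local Notation ks := (ksign R).

Lemma ksignC n m : ks n m = ks m n.
Proof. by rewrite /ksign andbC. Qed.

Lemma ksignDl n p m : ks (n + p) m = ks n m * ks p m.
Proof.
rewrite /ksign odd_abszD -signr_addb; congr (_ ^+ _).
by case: (odd `|n|); case: (odd `|p|); case: (odd `|m|).
Qed.

Lemma ksignDr n m p : ks n (m + p) = ks n m * ks n p.
Proof. by rewrite ksignC ksignDl !(ksignC n). Qed.

Lemma ksignN n m : ks (- n) m = ks n m.
Proof. by rewrite /ksign abszN. Qed.

Lemma ksignK n m x : ks n m * (ks n m * x) = x.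
Proof. by rewrite /ksign signrMK. Qed.

Lemma ksignKM n m : ks n m * ks n m = 1.
Proof. by rewrite -[X in _ * X]mulr1 ksignK. Qed.

Lemma ksign_comm n m x : ks n m * x = x * ks n m.
Proof. by rewrite /ksign; apply: esym; apply: commr_sign. Qed.

Lemma ksign_pull n m (x w : R) : x * (ks n m * w) = ks n m * (x * w).
Proof. by rewrite mulrA -ksign_comm -mulrA. Qed.

Lemma ksign0 m : ks 0 m = 1.
Proof. by []. Qed.

Lemma ksign2 m : ks 2 m = 1.
Proof. by []. Qed.

Lemma ksignm2 m : ks (-2) m = 1.
Proof. by []. Qed.

Lemma ksign1N m : ks (-1) m = ks 1 m.
Proof. by []. Qed.

Lemma ksign11 : ks 1 1 = -1.
Proof. by rewrite /ksign /= expr1. Qed.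

Lemma ksign_sq n : ks n n = ks 1 n.
Proof. by rewrite /ksign andbb. Qed.

Lemma ksign_opp n m (x : R) : ks n m * - x = - (ks n m * x).
Proof. by rewrite mulrN. Qed.

End Signs.

Section Grading.
Variables (R : pzRingType) (pi : int -> R -> R).
Hypothesis Hg : is_grading pi.

Lemma piD n x y : pi n (x + y) = pi n x + pi n y.
Proof. by case: Hg => H _ _ _ _; apply: H. Qed.

Lemma pi0 n : pi n 0 = 0.
Proof. by apply: (addrI (pi n 0)); rewrite -piD !addr0. Qed.

Lemma piN n x : pi n (- x) = - pi n x.
Proof. by apply/eqP; rewrite -addr_eq0 -piD addNr pi0. Qed.

Lemma piB n x y : pi n (x - y) = pi n x - pi n y.
Proof. by rewrite piD piN. Qed.

Lemma pi_sum n (I : Type) (r : seq I) (P : pred I) (F : I -> R) :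
  pi n (\sum_(i <- r | P i) F i) = \sum_(i <- r | P i) pi n (F i).
Proof. by apply: (big_morph (pi n)); [apply: piD | apply: pi0]. Qed.

Lemma pipi m n x : pi m (pi n x) = if m == n then pi n x else 0.
Proof. by case: Hg => _ H _ _ _; apply: H. Qed.

Lemma homog_pi n x : homog pi n (pi n x).
Proof. by rewrite /homog pipi eqxx. Qed.

Lemma pi_homog m n x : homog pi n x -> pi m x = if m == n then x else 0.
Proof. by rewrite /homog => <-; rewrite pipi. Qed.

Lemma homog1 : homog pi 0 1.
Proof. by case: Hg. Qed.

Lemma homogM m n x y : homog pi m x -> homog pi n y -> homog pi (m + n) (x * y).
Proof. by case: Hg => _ _ _ _ H; apply: H. Qed.

Lemma homog0 n : homog pi n 0.
Proof. by rewrite /homog pi0. Qed.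

Lemma homogD n x y : homog pi n x -> homog pi n y -> homog pi n (x + y).
Proof. by rewrite /homog piD => -> ->. Qed.

Lemma homogN n x : homog pi n x -> homog pi n (- x).
Proof. by rewrite /homog piN => ->. Qed.

Lemma homog_sign n (b : bool) x : homog pi n x -> homog pi n ((-1) ^+ b * x).
Proof. by case: b => h /=; rewrite ?expr1 ?expr0 ?mul1r ?mulN1r //; apply: homogN. Qed.

Lemma homog_ksign n p q x : homog pi n x -> homog pi n (ksign R p q * x).
Proof. exact: homog_sign. Qed.

Lemma pi_sign n (b : bool) x : pi n ((-1) ^+ b * x) = (-1) ^+ b * pi n x.
Proof. by case: b => /=; rewrite ?expr1 ?expr0 ?mul1r ?mulN1r // piN. Qed.

Lemma gsuppP x : uniq (gsupp pi x) /\ x = \sum_(k <- gsupp pi x) pi k x.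
Proof.
rewrite /gsupp; apply: (epsilon_spec (inhabits [::])
  (fun s : seq int => uniq s /\ x = \sum_(k <- s) pi k x)).
by case: Hg => _ _ H _ _; apply: H.
Qed.

Definition cover (s : seq int) (x : R) := forall k, k \notin s -> pi k x = 0.

Lemma cover_valid s x : x = \sum_(k <- s) pi k x -> cover s x.
Proof.
move=> hx k ks; rewrite hx pi_sum big1_seq // => j /andP [_ js].
by rewrite pipi; case: eqP => // ekj; move: ks; rewrite ekj js.
Qed.

Lemma cover_supp x : cover (gsupp pi x) x.
Proof. by apply: cover_valid; case: (gsuppP x). Qed.

Lemma uniq_supp x : uniq (gsupp pi x).
Proof. by case: (gsuppP x). Qed.

Lemma sum_cover (M : zmodType) (F : int -> R -> M) :
  (forall k, F k 0 = 0) -> forall x s t, uniq s -> uniq t -> cover s x -> cover t x ->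
  \sum_(k <- s) F k (pi k x) = \sum_(k <- t) F k (pi k x).
Proof.
move=> F0 x s t us ut cs ct.
have e1 : \sum_(k <- s) F k (pi k x) = \sum_(k <- s | k \in t) F k (pi k x).
  rewrite [RHS]big_mkcond /=; apply: eq_bigr => k _.
  by case: ifP => // /negbT kt; rewrite ct // F0.
have e2 : \sum_(k <- t) F k (pi k x) = \sum_(k <- t | k \in s) F k (pi k x).
  rewrite [RHS]big_mkcond /=; apply: eq_bigr => k _.
  by case: ifP => // /negbT kt; rewrite cs // F0.
rewrite e1 e2 -(big_filter s) -(big_filter t); apply: perm_big; apply: uniq_perm; rewrite ?filter_uniq //.
by move=> k; rewrite !mem_filter andbC.
Qed.

Lemma cover_decomp s x : uniq s -> cover s x -> x = \sum_(k <- s) pi k x.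
Proof.
move=> us cs; case: (gsuppP x) => u e; rewrite {1}e.
by apply: (@sum_cover R (fun _ v => v)) => //; apply: cover_supp.
Qed.

Lemma decomp x : x = \sum_(k <- gsupp pi x) pi k x.
Proof. by case: (gsuppP x). Qed.

Lemma cover_homog n x : homog pi n x -> cover [:: n] x.
Proof. by move=> h k; rewrite inE (pi_homog _ h) => /negbTE ->. Qed.

Lemma coverD s x y : cover s x -> cover s y -> cover s (x + y).
Proof. by move=> cx cy k ks; rewrite piD cx // cy // addr0. Qed.

Lemma cover_sub s t x : {subset s <= t} -> cover s x -> cover t x.
Proof. by move=> st cs k kt; apply: cs; apply: contra kt; apply: st. Qed.

Lemma homog_ind (P : R -> Prop) : P 0 -> (forall x y, P x -> P y -> P (x + y)) ->
  (forall n x, homog pi n x -> P x) -> forall x, P x.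
Proof.
move=> P0 PD Ph x; rewrite (decomp x); elim: (gsupp pi x) => [|k s IH].
  by rewrite big_nil.
by rewrite big_cons; apply: PD => //; apply: (Ph k); apply: homog_pi.
Qed.

Lemma pi_mull m n x y : homog pi m x -> pi n (x * y) = x * pi (n - m) y.
Proof.
move=> hx; rewrite [in LHS](decomp y) [in RHS](decomp y) mulr_sumr pi_sum pi_sum mulr_sumr.
apply: eq_bigr => k _; rewrite pipi (pi_homog _ (homogM hx (homog_pi k y))).
rewrite subr_eq (addrC k); by case: eqP => _; rewrite ?mulr0.
Qed.

Lemma pi_mulr m n x y : homog pi m y -> pi n (x * y) = pi (n - m) x * y.
Proof.
move=> hy; rewrite [in LHS](decomp x) [in RHS](decomp x) mulr_suml pi_sum pi_sum mulr_suml.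
apply: eq_bigr => k _; rewrite pipi (pi_homog _ (homogM (homog_pi k x) hy)).
rewrite subr_eq; by case: eqP => _; rewrite ?mul0r.
Qed.

Local Notation tw := (twist pi).

Lemma twist_cover n x s : uniq s -> cover s x -> tw n x = \sum_(k <- s) ksign R n k * pi k x.
Proof.
move=> us cs; rewrite /twist.
apply: (@sum_cover R (fun k v => ksign R n k * v)) => //; last by apply: cover_supp.
  by move=> k; rewrite mulr0.
exact: uniq_supp.
Qed.

Lemma twist_homog n m x : homog pi m x -> tw n x = ksign R n m * x.
Proof.
move=> h; by rewrite (@twist_cover n x [:: m] erefl (cover_homog h)) big_seq1 h.
Qed.

Lemma twistD n x y : tw n (x + y) = tw n x + tw n y.
Proof.
set s := undup (gsupp pi x ++ gsupp pi y).
have us : uniq s by apply: undup_uniq.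
have cx : cover s x.
  by move=> k ks; apply: (cover_supp (x:=x)); apply: contra ks => kx; rewrite mem_undup mem_cat kx.
have cy : cover s y.
  by move=> k ks; apply: (cover_supp (x:=y)); apply: contra ks => kx; rewrite mem_undup mem_cat kx orbT.
rewrite (twist_cover n us (coverD cx cy)) (twist_cover n us cx) (twist_cover n us cy) -big_split /=.
by apply: eq_bigr => k _; rewrite piD mulrDr.
Qed.

Lemma twist0 n : tw n 0 = 0.
Proof. by rewrite (twist_homog n (homog0 0)) mulr0. Qed.

Lemma twistN n x : tw n (- x) = - tw n x.
Proof. by apply/eqP; rewrite -addr_eq0 -twistD addNr twist0. Qed.

Lemma twist_sum n (I : Type) (r : seq I) (P : pred I) (F : I -> R) :
  tw n (\sum_(i <- r | P i) F i) = \sum_(i <- r | P i) tw n (F i).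
Proof. by apply: (big_morph (tw n)); [apply: twistD | apply: twist0]. Qed.

Lemma homog_twist n m x : homog pi m x -> homog pi m (tw n x).
Proof. by move=> h; rewrite (twist_homog n h); apply: homog_ksign. Qed.

Lemma pi_twist n k x : pi k (tw n x) = ksign R n k * pi k x.
Proof.
pose P x := pi k (tw n x) = ksign R n k * pi k x.
apply: (@homog_ind P) => {x}.
- by rewrite /P twist0 pi0 mulr0.
- by move=> x y; rewrite /P twistD !piD mulrDr => -> ->.
move=> m x h; rewrite /P (twist_homog n h) /ksign pi_sign (pi_homog k h).
by case: eqP => [->|_]; rewrite ?mulr0.
Qed.

Lemma twist_twist n m x : tw n (tw m x) = tw (n + m) x.
Proof.
pose P x := tw n (tw m x) = tw (n + m) x.
apply: (@homog_ind P) => {x}.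
- by rewrite /P !twist0.
- by move=> x y; rewrite /P !twistD => -> ->.
move=> k x h; rewrite /P (twist_homog m h) (twist_homog n (homog_ksign m k h)).
by rewrite (twist_homog _ h) mulrA ksignDl.
Qed.

Lemma twist_ext n m x : ksign R n =1 ksign R m -> tw n x = tw m x.
Proof.
move=> e; pose P x := tw n x = tw m x.
apply: (@homog_ind P) => {x}.
- by rewrite /P !twist0.
- by move=> x y; rewrite /P !twistD => -> ->.
by move=> k x h; rewrite /P !(twist_homog _ h) e.
Qed.

Lemma twist11 x : tw 1 (tw 1 x) = x.
Proof.
rewrite twist_twist (@twist_ext _ 0); last by move=> k.
pose P x := tw 0 x = x.
apply: (@homog_ind P) => {x}.
- by rewrite /P twist0.
- by move=> x y; rewrite /P !twistD => -> ->.
by move=> k x h; rewrite /P (twist_homog _ h) ksign0 mul1r.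
Qed.

Lemma twist_mul x y : tw 1 (x * y) = tw 1 x * tw 1 y.
Proof.
pose P x := forall y, tw 1 (x * y) = tw 1 x * tw 1 y.
move: y; apply: (@homog_ind P) => {x}.
- by move=> y; rewrite mul0r !twist0 mul0r.
- by move=> x x' hx hx' y; rewrite mulrDl !twistD hx hx' mulrDl.
move=> m x hm y.
pose Q y := tw 1 (x * y) = tw 1 x * tw 1 y.
apply: (@homog_ind Q) => {y}.
- by rewrite /Q mulr0 !twist0 mulr0.
- by move=> y y'; rewrite /Q mulrDr !twistD mulrDr => -> ->.
move=> n y hn; rewrite /Q (twist_homog 1 (homogM hm hn)) (twist_homog 1 hm) (twist_homog 1 hn).
rewrite ksignDr -!mulrA; congr (_ * _); rewrite !mulrA; congr (_ * _).
by rewrite ksign_comm.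
Qed.

Lemma twist_ksign n a b x : tw n (ksign R a b * x) = ksign R a b * tw n x.
Proof. by rewrite /ksign; case: (_ && _) => /=; rewrite ?expr0 ?expr1 ?mul1r ?mulN1r // twistN. Qed.

Lemma twist_mull n p r x : homog pi p r -> tw n (r * x) = ksign R n p * (r * tw n x).
Proof.
move=> hr; pose P x := tw n (r * x) = ksign R n p * (r * tw n x).
apply: (@homog_ind P) => {x}.
- by rewrite /P mulr0 !twist0 mulr0 mulr0.
- by move=> x y; rewrite /P mulrDr !twistD => -> ->; rewrite !mulrDr.
move=> k x h; rewrite /P (twist_homog n (homogM hr h)) (twist_homog n h) ksignDr.
by rewrite ksign_pull -mulrA.
Qed.

Lemma twist_1n n x : tw 1 (tw n x) = tw (n + 1) x.
Proof. by rewrite twist_twist addrC. Qed.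

Lemma twist_1n1 n x : tw 1 (tw n (tw 1 x)) = tw n x.
Proof.
rewrite !twist_twist; apply: twist_ext => k.
rewrite /ksign !odd_abszD /=.
by case: (odd `|n|); case: (odd `|k|).
Qed.

Lemma twist1_1 : tw 1 1 = 1.
Proof. by rewrite (twist_homog 1 homog1) ksignC ksign0 mul1r. Qed.

End Grading.

Section DG.
Variables (R : pzRingType) (pi : int -> R -> R) (d : R -> R).
Hypothesis Hg : is_grading pi.
Hypothesis Hd : dg_ring pi d.
Local Notation tw := (twist pi).

Lemma dD x y : d (x + y) = d x + d y.
Proof. by case: Hd => H _ _ _; apply: H. Qed.

Lemma d0 : d 0 = 0.
Proof. by apply: (addrI (d 0)); rewrite -dD !addr0. Qed.

Lemma dN x : d (- x) = - d x.
Proof. by apply/eqP; rewrite -addr_eq0 -dD addNr d0. Qed.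

Lemma dB x y : d (x - y) = d x - d y.
Proof. by rewrite dD dN. Qed.

Lemma d_sum (I : Type) (r : seq I) (P : pred I) (F : I -> R) :
  d (\sum_(i <- r | P i) F i) = \sum_(i <- r | P i) d (F i).
Proof. by apply: (big_morph d); [apply: dD | apply: d0]. Qed.

Lemma dd x : d (d x) = 0.
Proof. by case: Hd => _ H _ _; apply: H. Qed.

Lemma homog_d n x : homog pi n x -> homog pi (n + 1) (d x).
Proof. by case: Hd => _ _ H _; apply: H. Qed.

Lemma leib n a b : homog pi n a -> d (a * b) = d a * b + ksign R 1 n * (a * d b).
Proof. by case: Hd => _ _ _ H; apply: H. Qed.

Lemma d_pi n x : d (pi n x) = pi (n + 1) (d x).
Proof.
rewrite [in LHS](decomp Hg x) [in RHS](decomp Hg x) !(pi_sum Hg) !d_sum (pi_sum Hg).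
apply: eq_bigr => k _; rewrite (pipi Hg) (pi_homog Hg _ (homog_d (homog_pi Hg k x))).
have -> : (n + 1 == k + 1) = (n == k) by apply/eqP/eqP => [/addIr|->].
case: eqP => _ //; exact: d0.
Qed.

Lemma d1 : d 1 = 0.
Proof.
have := leib 1 (homog1 Hg); rewrite !mulr1 mul1r ksignC ksign0 mul1r.
by move=> h; apply: (addrI (d 1)); rewrite addr0 -h.
Qed.

Lemma cyc_pi n x : d x = 0 -> d (pi n x) = 0.
Proof. by move=> h; rewrite d_pi h (pi0 Hg). Qed.

Lemma d_mul_cyc_l a b : d a = 0 -> d (a * b) = tw 1 a * d b.
Proof.
move=> ha; rewrite [in LHS](decomp Hg a) mulr_suml d_sum.
rewrite (twist_cover Hg 1 (uniq_supp Hg a) (cover_supp Hg (x:=a))) mulr_suml.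
apply: eq_bigr => k _; rewrite (leib _ (homog_pi Hg k a)) cyc_pi // mul0r add0r.
by rewrite mulrA.
Qed.

Lemma d_mul_cyc_r a b : d b = 0 -> d (a * b) = d a * b.
Proof.
move=> hb; rewrite [in LHS](decomp Hg a) [in RHS](decomp Hg a) mulr_suml d_sum d_sum mulr_suml.
by apply: eq_bigr => k _; rewrite (leib _ (homog_pi Hg k a)) hb !mulr0 addr0.
Qed.

Lemma d_sign (b : bool) x : d ((-1) ^+ b * x) = (-1) ^+ b * d x.
Proof. by case: b => /=; rewrite ?expr0 ?expr1 ?mul1r ?mulN1r // dN. Qed.

Lemma d_ksign n m x : d (ksign R n m * x) = ksign R n m * d x.
Proof. exact: d_sign. Qed.

Lemma d_twist1 x : d (tw 1 x) = - tw 1 (d x).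
Proof.
pose P x := d (tw 1 x) = - tw 1 (d x).
apply: (@homog_ind _ _ Hg P) => {x}.
- by rewrite /P (twist0 Hg) d0 (twist0 Hg) oppr0.
- by move=> x y; rewrite /P (twistD Hg) !dD (twistD Hg) opprD => -> ->.
move=> n x h; rewrite /P (twist_homog Hg 1 h) (twist_homog Hg 1 (homog_d h)).
rewrite d_sign ksignDr ksign11 mulrN1 mulNr opprK //.
Qed.

Lemma cyc_twist1 x : d x = 0 -> d (tw 1 x) = 0.
Proof. by move=> h; rewrite d_twist1 h (twist0 Hg) oppr0. Qed.

Lemma kerdD x y : kerd d x -> kerd d y -> kerd d (x + y).
Proof. by rewrite /kerd => /eqP hx /eqP hy; rewrite dD hx hy addr0. Qed.

End DG.

Section Main.
Variables (K A : pzRingType) (piK : int -> K -> K) (piA : int -> A -> A)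
  (dK : K -> K) (dA : A -> A) (iota : {rmorphism K -> A}).
Hypotheses (HgK : is_grading piK) (HgA : is_grading piA)
  (HdK : dg_ring piK dK) (HdA : dg_ring piA dA)
  (Halg : dg_algebra_over piK piA dK dA iota)
  (Haz : graded_azumaya piK piA predT predT iota).
Variable y : K.
Hypotheses (Hy1 : homog piK (-1) y) (Hy2 : dK y = 1).

Local Notation epsA := (twist piA 1).
Local Notation epsK := (twist piK 1).
Definition u := iota y.
Definition pA x := x - u * dA x.
Definition u2 := u * u.

Lemma iota_homog n r : homog piK n r -> homog piA n (iota r).
Proof. by case: Halg => H _ _; apply: H. Qed.

Lemma d_iota r : dA (iota r) = iota (dK r).
Proof. by case: Halg => _ H _; apply: H. Qed.

Lemma iota_central r n m a : homog piA m a ->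
  piA n (iota r) * a = ksign A n m * (a * piA n (iota r)).
Proof. by case: Halg => _ _ H h; apply: H. Qed.

Lemma iota_inj r s : iota r = iota s -> r = s.
Proof.
case: Haz => _ _ H _ _ e; apply/eqP; rewrite -subr_eq0; apply/eqP; apply: H => //.
by rewrite rmorphB e subrr.
Qed.

Lemma iota_pi n r : iota (piK n r) = piA n (iota r).
Proof.
pose P r := iota (piK n r) = piA n (iota r).
apply: (homog_ind HgK (P := P)) => {r}.
- by rewrite /P (pi0 HgK) rmorph0 (pi0 HgA).
- by move=> r s; rewrite /P (piD HgK) !rmorphD (piD HgA) => -> ->.
move=> m r h; rewrite /P (pi_homog HgK _ h) (pi_homog HgA _ (iota_homog h)).
by case: eqP; rewrite ?rmorph0.
Qed.

Lemma homog_iota n r : homog piA n (iota r) -> homog piK n r.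
Proof. by rewrite /homog -iota_pi => /iota_inj. Qed.

Lemma iota_twist n r : iota (twist piK n r) = twist piA n (iota r).
Proof.
pose P r := iota (twist piK n r) = twist piA n (iota r).
apply: (homog_ind HgK (P := P)) => {r}.
- by rewrite /P (twist0 HgK) rmorph0 (twist0 HgA).
- by move=> r s; rewrite /P (twistD HgK) !rmorphD (twistD HgA) => -> ->.
move=> m r h; rewrite /P (twist_homog HgK _ h) (twist_homog HgA _ (iota_homog h)).
rewrite rmorphM; congr (_ * _); rewrite /ksign; case: (_ && _) => /=.
  by rewrite !expr1 rmorphN1.
by rewrite !expr0 rmorph1.
Qed.

Lemma iota_comm r p m a : homog piK p r -> homog piA m a ->
  iota r * a = ksign A p m * (a * iota r).
Proof.
move=> hr ha; have := iota_central r p ha.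
by rewrite -iota_pi hr.
Qed.

Lemma u_homog : homog piA (-1) u.
Proof. exact: iota_homog. Qed.

Lemma du : dA u = 1.
Proof. by rewrite /u d_iota Hy2 rmorph1. Qed.

Lemma u_comm a : u * a = epsA a * u.
Proof.
pose P a := u * a = epsA a * u.
apply: (homog_ind HgA (P := P)) => {a}.
- by rewrite /P mulr0 (twist0 HgA) mul0r.
- by move=> a b; rewrite /P mulrDr (twistD HgA) mulrDl => -> ->.
move=> m a h; rewrite /P (twist_homog HgA _ h) /u (iota_comm Hy1 h) -mulrA.
by rewrite ksign1N.
Qed.

Lemma u_comm' a : a * u = u * epsA a.
Proof. by rewrite u_comm (twist11 HgA). Qed.

Lemma ksign1m1 : ksign A 1 (-1) = -1.
Proof. by rewrite /ksign /= expr1. Qed.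

Lemma d_u x : dA (u * x) = x - u * dA x.
Proof. by rewrite (leib HdA x u_homog) du mul1r ksign1m1 mulN1r. Qed.

Lemma eps_u : epsA u = - u.
Proof. by rewrite (twist_homog HgA _ u_homog) ksign1m1 mulN1r. Qed.

Lemma u2_anti : u2 + u2 = 0.
Proof. by rewrite /u2 {1}u_comm eps_u mulNr addNr. Qed.

Lemma u2_comm a : u2 * a = a * u2.
Proof. by rewrite /u2 -mulrA (u_comm a) mulrA (u_comm (epsA a)) (twist11 HgA) -mulrA. Qed.

Lemma d_u2 : dA u2 = 0.
Proof. by rewrite /u2 d_u du mulr1 subrr. Qed.

Lemma u2_iota : u2 = iota (y * y).
Proof. by rewrite rmorphM. Qed.

Lemma u2_homog : homog piA (-2) u2.
Proof. exact: (homogM HgA u_homog u_homog). Qed.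

Lemma pAD x z : pA (x + z) = pA x + pA z.
Proof. by rewrite /pA (dD HdA) mulrDr opprD addrACA. Qed.

Lemma pA0 : pA 0 = 0.
Proof. by rewrite /pA (d0 HdA) mulr0 subr0. Qed.

Lemma pAN x : pA (- x) = - pA x.
Proof. by rewrite /pA (dN HdA) mulrN opprK opprD opprK. Qed.

Lemma pA_sum (I : Type) (r : seq I) (P : pred I) (F : I -> A) :
  pA (\sum_(i <- r | P i) F i) = \sum_(i <- r | P i) pA (F i).
Proof. by apply: (big_morph pA); [apply: pAD | apply: pA0]. Qed.

Lemma d_pA x : dA (pA x) = 0.
Proof. by rewrite /pA (dB HdA) d_u (dd HdA) mulr0 subr0 subrr. Qed.

Lemma pA_cyc z : dA z = 0 -> pA z = z.
Proof. by move=> h; rewrite /pA h mulr0 subr0. Qed.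

Lemma decompA x : x = pA x + u * dA x.
Proof. by rewrite /pA subrK. Qed.

Lemma pA_u w : pA (u * w) = u2 * dA w.
Proof. by rewrite /pA d_u mulrBr opprB addrC subrK mulrA. Qed.

Lemma pi_pA n x : piA n (pA x) = pA (piA n x).
Proof.
rewrite /pA (piB HgA) (d_pi HgA HdA) (pi_mull HgA _ _ u_homog).
by rewrite opprK.
Qed.

Lemma homog_pA n x : homog piA n x -> homog piA n (pA x).
Proof. by rewrite /homog pi_pA => ->. Qed.

Lemma pA_mull z x : dA z = 0 -> pA (z * x) = z * pA x.
Proof.
move=> hz; rewrite /pA (d_mul_cyc_l HgA HdA _ hz) mulrBr; congr (_ - _).
by rewrite mulrA -u_comm' mulrA.
Qed.

Lemma pA_mulr x z : dA z = 0 -> pA (x * z) = pA x * z.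
Proof.
by move=> hz; rewrite /pA (d_mul_cyc_r HgA HdA _ hz) mulrBl mulrA.
Qed.

Lemma decomp_uniq z0 z1 : dA z0 = 0 -> dA z1 = 0 -> z0 + u * z1 = 0 -> z0 = 0 /\ z1 = 0.
Proof.
move=> h0 h1 e; have : dA (z0 + u * z1) = 0 by rewrite e (d0 HdA).
rewrite (dD HdA) h0 add0r d_u h1 mulr0 subr0 => e1.
by split => //; move: e; rewrite e1 mulr0 addr0.
Qed.

Lemma homog_dA n x : homog piA n x -> homog piA (n + 1) (dA x).
Proof. exact: homog_d. Qed.

Lemma eps_cyc x : dA x = 0 -> dA (epsA x) = 0.
Proof. exact: cyc_twist1. Qed.

Lemma iota_cyc r : dK r = 0 -> dA (iota r) = 0.
Proof. by move=> h; rewrite d_iota h rmorph0. Qed.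

Lemma cyc_iota r : dA (iota r) = 0 -> dK r = 0.
Proof. by rewrite d_iota -(rmorph0 iota) => /iota_inj. Qed.

Lemma dA1 : dA 1 = 0.
Proof. exact: (d1 HgA HdA). Qed.


Lemma ksign_help n m : ksign A 1 n * ksign A n (m + 1) = ksign A n m.
Proof.
rewrite /ksign odd_abszD /=.
by case: (odd `|n|); case: (odd `|m|) => /=; rewrite ?expr0 ?expr1 ?mulr1 ?mul1r ?mulrNN ?mulr1.
Qed.

Definition pK r := r - y * dK r.

Lemma iota_pK r : iota (pK r) = pA (iota r).
Proof. by rewrite /pK /pA rmorphB rmorphM d_iota. Qed.

Lemma kerP (R : pzRingType) (d : R -> R) x : kerd d x = (d x == 0).
Proof. by []. Qed.

Lemma SK_pK r : dK (pK r) = 0.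
Proof. by apply: cyc_iota; rewrite iota_pK d_pA. Qed.

Definition qK r := y * y * epsK (dK r).

Lemma iota_qK r : iota (qK r) = u2 * epsA (dA (iota r)).
Proof. by rewrite /qK !rmorphM iota_twist d_iota. Qed.

Lemma SK_qK r : dK (qK r) = 0.
Proof.
apply: cyc_iota; rewrite iota_qK (d_mul_cyc_l HgA HdA _ d_u2).
by rewrite (eps_cyc (dd HdA _)) mulr0.
Qed.

Lemma yy_comm r : y * y * r = r * (y * y).
Proof. by apply: iota_inj; rewrite !rmorphM -/u -/u2 u2_comm. Qed.

Lemma pK_mull z r : dK z = 0 -> pK (z * r) = z * pK r.
Proof.
move=> hz; apply: iota_inj; rewrite iota_pK !rmorphM iota_pK.
by rewrite pA_mull // iota_cyc.
Qed.

Lemma qK_mull z r : dK z = 0 -> qK (z * r) = z * qK r.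
Proof.
move=> hz; rewrite /qK (d_mul_cyc_l HgK HdK _ hz) (twist_mul HgK) (twist11 HgK).
by rewrite mulrA yy_comm -mulrA.
Qed.

Lemma pKD r s : pK (r + s) = pK r + pK s.
Proof. by rewrite /pK (dD HdK) mulrDr opprD addrACA. Qed.

Lemma qKD r s : qK (r + s) = qK r + qK s.
Proof. by rewrite /qK (dD HdK) (twistD HgK) mulrDr. Qed.

Lemma homog_pK n r : homog piK n r -> homog piK n (pK r).
Proof.
move=> h; apply: homog_iota; rewrite iota_pK; apply: homog_pA; exact: iota_homog.
Qed.

Lemma homog_qK n r : homog piK n r -> homog piK (n - 1) (qK r).
Proof.
move=> h; rewrite /qK.
have -> : n - 1 = (-1 + -1) + (n + 1) by ring.
apply: (homogM HgK (homogM HgK Hy1 Hy1)); apply: (homog_twist HgK).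
exact: (homog_d HdK).
Qed.

Lemma split_term r e : pA (iota r * e) = iota (pK r) * pA e + iota (qK r) * dA e.
Proof.
rewrite {1}(decompA (iota r)) -iota_pK d_iota mulrDl pAD -mulrA pA_u.
rewrite pA_mull ?iota_cyc ?SK_pK //; congr (_ + _).
rewrite (d_mul_cyc_l HgA HdA) ?iota_cyc ?(dd HdK) // iota_qK d_iota mulrA.
by [].
Qed.

Lemma clause_proj : gr_fg_projective piK piA (kerd dK) (kerd dA) iota.
Proof.
case: Haz => [[Hproj _] _ _ _ _].
case: Hproj => k [e [dg [f [He Hf [Hadd Hlin] Hhom Hrec]]]].
have sl : forall i : 'I_k, split (lshift k i) = inl i := fun i => unsplitK (inl i).
have sr : forall i : 'I_k, split (rshift k i) = inr i := fun i => unsplitK (inr i).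
exists (k + k).
exists (fun j => match split j with inl i => pA (e i) | inr i => dA (e i) end).
exists (fun j => match split j with inl i => dg i | inr i => dg i + 1 end).
exists (fun j x => match split j with inl i => pK (f i x) | inr i => qK (f i x) end).
split.
- move=> j; case: (split j) => i; rewrite kerP.
    by split; [apply/eqP; apply: d_pA | apply: homog_pA; case: (He i)].
  by split; [apply/eqP; apply: (dd HdA) | apply: (homog_d HdA); case: (He i)].
- move=> j x _; case: (split j) => i; rewrite kerP; apply/eqP.
    exact: SK_pK.
  exact: SK_qK.
- split.
    move=> j x z _ _; case: (split j) => i; rewrite Hadd //.
      exact: pKD.
    exact: qKD.
  move=> j r x; rewrite !kerP => /eqP hr _; case: (split j) => i; rewrite Hlin //.
    exact: pK_mull.
  exact: qK_mull.
- move=> j m x _ hx; case: (split j) => i.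
    by apply: homog_pK; apply: Hhom.
  have -> : m - (dg i + 1) = m - dg i - 1 by ring.
  by apply: homog_qK; apply: Hhom.
move=> x; rewrite kerP => /eqP hx.
rewrite big_split_ord /=.
under eq_bigr do rewrite sl.
under [X in _ = _ + X]eq_bigr do rewrite sr.
rewrite -big_split /= -{1}(pA_cyc hx) {1}(Hrec x) // pA_sum.
by apply: eq_bigr => i _; rewrite split_term.
Qed.

Lemma clause_faithful : gr_faithful (kerd dK) (kerd dA) iota.
Proof.
move=> r _ h; apply: iota_inj; rewrite rmorph0 -[iota r]mulr1; apply: h.
by rewrite kerP dA1.
Qed.

Lemma clause_cent : forall r, kerd dK r -> kerd dA (iota r) /\ grcentral piA (kerd dA) (iota r).
Proof.
move=> r; rewrite !kerP => /eqP hr; split; first by rewrite iota_cyc.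
by move=> n m a _ ha; apply: iota_central.
Qed.

Lemma clause_inj : forall r, kerd dK r -> iota r = 0 -> r = 0.
Proof. by move=> r _ h; apply: iota_inj; rewrite h rmorph0. Qed.

Lemma clause_centre : forall z, kerd dA z -> grcentral piA (kerd dA) z ->
  exists2 r, kerd dK r & iota r = z.
Proof.
move=> z; rewrite kerP => /eqP hz hc.
have hc' : grcentral piA predT z.
  move=> n m a _ ha.
  have h0 : piA n z * pA a = ksign A n m * (pA a * piA n z).
    by apply: hc; [rewrite kerP d_pA | apply: homog_pA].
  have h1 : piA n z * dA a = ksign A n (m + 1) * (dA a * piA n z).
    by apply: hc; [rewrite kerP (dd HdA) | apply: homog_d].
  rewrite [in LHS](decompA a) [in RHS](decompA a) mulrDr mulrDl h0 mulrDr; congr (_ + _).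
  rewrite mulrA u_comm' -mulrA (twist_homog HgA _ (homog_pi HgA n z)) -mulrA h1.
  by rewrite (ksign_pull 1 n u) (ksign_pull n (m+1) u) mulrA ksign_help -!mulrA.
case: Haz => _ _ _ Hc _; case: (Hc z isT hc') => r _ er.
exists r => //; rewrite kerP; apply/eqP; apply: cyc_iota; by rewrite er.
Qed.


Local Notation ZA := (kerd dA).
Local Notation ZK := (kerd dK).
Local Notation tw := (twist piA).

Lemma ZA_mul x z : dA x = 0 -> dA z = 0 -> dA (x * z) = 0.
Proof. by move=> hx hz; rewrite (d_mul_cyc_r HgA HdA _ hz) hx mul0r. Qed.

Lemma cyc_twist n x : dA x = 0 -> dA (tw n x) = 0.
Proof.
move=> h; rewrite (twist_cover HgA n (uniq_supp HgA x) (cover_supp HgA (x:=x))) (d_sum HdA).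
by apply: big1 => k _; rewrite (d_ksign HdA) (cyc_pi HgA HdA _ h) mulr0.
Qed.

Lemma ZA_ind (P : A -> Prop) : P 0 ->
  (forall x z, dA x = 0 -> dA z = 0 -> P x -> P z -> P (x + z)) ->
  (forall n x, dA x = 0 -> homog piA n x -> P x) ->
  forall x, dA x = 0 -> P x.
Proof.
move=> P0 PD Ph x hx; rewrite (decomp HgA x).
elim: (gsupp piA x) => [|k s IH]; first by rewrite big_nil.
rewrite big_cons; apply: PD => //.
- exact: (cyc_pi HgA HdA _ hx).
- by rewrite (d_sum HdA); apply: big1 => j _; apply: (cyc_pi HgA HdA _ hx).
- by apply: (Ph k); [apply: (cyc_pi HgA HdA _ hx) | apply: homog_pi].
Qed.

Lemma pA_ksign a b x : pA (ksign A a b * x) = ksign A a b * pA x.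
Proof. by rewrite /ksign; case: (_ && _) => /=; rewrite ?expr0 ?expr1 ?mul1r ?mulN1r // pAN. Qed.

Lemma iota_ksign a b : iota (ksign K a b) = ksign A a b.
Proof. by rewrite /ksign; case: (_ && _) => /=; rewrite ?expr0 ?expr1 ?rmorph1 ?rmorphN1. Qed.

Lemma yy_cyc : dK (y * y) = 0.
Proof. by apply: cyc_iota; rewrite -u2_iota d_u2. Qed.

Lemma yy_homog : homog piK (-2) (y * y).
Proof. exact: (homogM HgK Hy1 Hy1). Qed.

Section GendClosure.
Variables (SK : pred K) (SA : pred A).
Local Notation glinS := (glin piK piA SK SA iota).
Local Notation gendS := (gend piK piA SK SA iota).

Lemma gend_ext f g : gendS f -> (forall x, f x = g x) -> gendS g.
Proof.
case=> k [dg [fs [H1 H2]]] e; exists k, dg, fs; split => // x.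
by rewrite -e H2.
Qed.

Lemma gend0 : gendS (fun _ => 0).
Proof. by exists 0%N, (fun i => 0), (fun i x => 0); split => [[]|x] //; rewrite big_ord0. Qed.

Lemma gend_glin n f : glinS n f -> gendS f.
Proof.
move=> h; exists 1%N, (fun _ => n), (fun _ => f); split => // x.
by rewrite big_ord1.
Qed.

Lemma gend_add f g : gendS f -> gendS g -> gendS (fun x => f x + g x).
Proof.
case=> k1 [dg1 [fs1 [H1 E1]]]; case=> k2 [dg2 [fs2 [H2 E2]]].
exists (k1 + k2)%N.
exists (fun j => match split j with inl i => dg1 i | inr i => dg2 i end).
exists (fun j => match split j with inl i => fs1 i | inr i => fs2 i end).
have sl : forall i : 'I_k1, split (lshift k2 i) = inl i := fun i => unsplitK (inl i).
have sr : forall i : 'I_k2, split (rshift k1 i) = inr i := fun i => unsplitK (inr i).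
split.
  by move=> j; case: (split j).
move=> x; rewrite big_split_ord /= E1 E2.
congr (_ + _); apply: eq_bigr => i _; by rewrite ?sl ?sr.
Qed.

Lemma gend_sum (I : Type) (r : seq I) (F : I -> A -> A) :
  (forall i, gendS (F i)) -> gendS (fun x => \sum_(i <- r) F i x).
Proof.
move=> H; elim: r => [|i r IH].
  by apply: (gend_ext gend0) => x; rewrite big_nil.
apply: (gend_ext (gend_add (H i) IH)) => x; by rewrite big_cons.
Qed.

End GendClosure.

Lemma azphi_cover (SA : pred A) a b s x : uniq s -> cover piA s b ->
  azphi piA SA a b x = if SA x then \sum_(n <- s) a * tw n x * piA n b else 0.
Proof.
move=> us cs; rewrite /azphi; case: (SA x) => //=.
apply: (@sum_cover _ _ _ (fun n v => a * tw n x * v)) => //.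
  by move=> k; rewrite mulr0.
exact: uniq_supp.
exact: cover_supp.
Qed.


Lemma sign_swap a b c d (X : A) : ksign A a b * (ksign A c d * X) = ksign A c d * (ksign A a b * X).
Proof. by rewrite mulrA ksign_comm -mulrA. Qed.

Lemma rho_comm r p x : homog piK p r -> homog piA p (iota r) ->
  x * iota r = iota r * tw p x.
Proof.
move=> hr hr'; pose P x := x * iota r = iota r * tw p x.
apply: (homog_ind HgA (P := P)) => {x}.
- by rewrite /P mul0r (twist0 HgA) mulr0.
- by move=> x z; rewrite /P mulrDl (twistD HgA) mulrDr => -> ->.
move=> k x h; rewrite /P (twist_homog HgA _ h) ksign_pull (iota_comm hr h).
by rewrite ksignK.
Qed.

Lemma rho_tw r p n x : homog piK p r -> iota r * tw n x = tw (n + p) x * iota r.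
Proof.
move=> hr; pose P x := iota r * tw n x = tw (n + p) x * iota r.
apply: (homog_ind HgA (P := P)) => {x}.
- by rewrite /P !(twist0 HgA) mulr0 mul0r.
- by move=> x z; rewrite /P !(twistD HgA) mulrDr mulrDl => -> ->.
move=> k x h; rewrite /P (twist_homog HgA _ h) (twist_homog HgA _ h).
rewrite ksign_pull (iota_comm hr h) ksignDl -!mulrA; congr (_ * _).
Qed.

Definition gmn m n a b x := if ZA x then piA m a * tw n x * piA n b else 0.

Lemma glin_gmn m n a b : dA a = 0 -> dA b = 0 ->
  glin piK piA ZK ZA iota (m + n) (gmn m n a b).
Proof.
move=> ha hb; split.
- by move=> x /negbTE h; rewrite /gmn h.
- move=> x hx; rewrite /gmn hx kerP; apply/eqP.
  apply: ZA_mul; last exact: (cyc_pi HgA HdA _ hb).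
  apply: ZA_mul; first exact: (cyc_pi HgA HdA _ ha).
  by apply: cyc_twist; apply/eqP.
- move=> x z hx hz; rewrite /gmn (kerdD HdA hx hz) hx hz (twistD HgA).
  by rewrite mulrDr mulrDl.
- move=> k x hx hk; rewrite /gmn hx (twist_homog HgA _ hk).
  have -> : k + (m + n) = m + k + n by ring.
  apply: (homogM HgA); last exact: homog_pi.
  apply: (homogM HgA); first exact: homog_pi.
  exact: homog_ksign.
move=> p r x; rewrite !kerP => /eqP hr hp /eqP hx.
have hrx : kerd dA (iota r * x) by rewrite kerP ZA_mul ?iota_cyc.
rewrite /gmn hrx kerP hx eqxx (twist_mull HgA n x (iota_homog hp)) ksign_pull -mulrA.
have e : piA m a * iota r = ksign A p m * (iota r * piA m a).
  by rewrite (iota_comm hp (homog_pi HgA m a)) ksignK.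
rewrite (mulrA (piA m a)) e -!mulrA ksignDl -!mulrA.
by rewrite (ksignC _ p m) sign_swap.
Qed.

Lemma gend_azZ a b : dA a = 0 -> dA b = 0 ->
  gend piK piA ZK ZA iota (azphi piA ZA a b).
Proof.
move=> ha hb.
pose F := fun x => \sum_(m <- gsupp piA a) \sum_(n <- gsupp piA b) gmn m n a b x.
have gF : gend piK piA ZK ZA iota F.
  apply: gend_sum => m; apply: gend_sum => n; apply: gend_glin.
  exact: glin_gmn.
apply: (gend_ext gF) => x; rewrite /F /azphi /gmn.
case: (kerd dA x) => /=; last by rewrite big1 // => m _; rewrite big1.
rewrite exchange_big /=; apply: eq_bigr => n _.
by rewrite -!mulr_suml -(decomp HgA a).
Qed.


Section AzAdd.
Variable SA : pred A.
Local Notation az := (azphi piA SA).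

Lemma az_addl a a' b : az (a + a') b = (fun x => az a b x + az a' b x).
Proof.
apply: functional_extensionality => x; rewrite /azphi; case: (SA x) => /=; last by rewrite addr0.
by rewrite -big_split; apply: eq_bigr => n _; rewrite !mulrDl.
Qed.

Lemma az_addr a b b' : az a (b + b') = (fun x => az a b x + az a b' x).
Proof.
apply: functional_extensionality => x.
set s := undup (gsupp piA b ++ gsupp piA b').
have us : uniq s by apply: undup_uniq.
have cb : cover piA s b.
  by move=> k ks; apply: (cover_supp HgA (x:=b)); apply: contra ks => kx; rewrite mem_undup mem_cat kx.
have cb' : cover piA s b'.
  by move=> k ks; apply: (cover_supp HgA (x:=b')); apply: contra ks => kx; rewrite mem_undup mem_cat kx orbT.
rewrite (azphi_cover _ _ _ us (coverD HgA cb cb')) (azphi_cover _ _ _ us cb) (azphi_cover _ _ _ us cb').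
case: (SA x); last by rewrite addr0.
by rewrite -big_split; apply: eq_bigr => n _; rewrite (piD HgA) mulrDr.
Qed.

Lemma az0l b x : az 0 b x = 0.
Proof. by rewrite /azphi; case: (SA x) => //; apply: big1 => n _; rewrite !mul0r. Qed.

Lemma az0r a x : az a 0 x = 0.
Proof.
rewrite (azphi_cover _ _ _ (s:=[::]) _ (fun k _ => pi0 HgA k)) //.
by case: (SA x) => //; rewrite big_nil.
Qed.

Lemma az_bal a r b : az (a * iota r) b = az a (iota r * b).
Proof.
apply: functional_extensionality => x; move: r.
pose P r := az (a * iota r) b x = az a (iota r * b) x.
apply: (homog_ind HgK (P := P)).
- by rewrite /P rmorph0 mulr0 mul0r az0l az0r.
- by move=> r s; rewrite /P rmorphD mulrDr mulrDl az_addl az_addr /= => -> ->.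
move=> p r hp; rewrite /P.
set sb := gsupp piA b.
have us : uniq [seq n + p | n <- sb].
  by rewrite map_inj_uniq ?(uniq_supp HgA) // => i j /addIr.
have cs : cover piA [seq n + p | n <- sb] (iota r * b).
  move=> k ks; rewrite (pi_mull HgA _ _ (iota_homog hp)) (cover_supp HgA (x:=b)) ?mulr0 //.
  by apply: contra ks => kb; apply/mapP; exists (k - p) => //; rewrite subrK.
rewrite (azphi_cover _ _ _ us cs) (azphi_cover _ _ _ (uniq_supp HgA b) (cover_supp HgA (x:=b))).
case: (SA x) => //; rewrite big_map; apply: eq_bigr => n _.
rewrite (pi_mull HgA _ _ (iota_homog hp)) addrK -(mulrA a) (rho_tw n x hp).
by rewrite !mulrA.
Qed.

End AzAdd.


Lemma Zc a : dA (u2 * epsA (dA a)) = 0.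
Proof.
rewrite (d_mul_cyc_l HgA HdA _ d_u2) (cyc_twist1 HgA HdA) ?mulr0 //.
exact: (dd HdA).
Qed.

Lemma ksign_m1 n : ksign A n (-1) = ksign A n 1.
Proof. by rewrite ksignC ksign1N ksignC. Qed.

Lemma iota_split r : iota r = iota (pK r) + u * iota (dK r).
Proof. by rewrite iota_pK -d_iota -decompA. Qed.

Lemma opp_u2 w : - (u2 * w) = u2 * w.
Proof.
apply/eqP; rewrite eq_sym -addr_eq0 -mulrDl u2_anti mul0r //.
Qed.

Section Beta.
Variables (G : zmodType) (beta : A -> A -> G).
Hypotheses
  (Hb1 : forall a a' b, ZA a -> ZA a' -> ZA b -> beta (a + a') b = beta a b + beta a' b)
  (Hb2 : forall a b b', ZA a -> ZA b -> ZA b' -> beta a (b + b') = beta a b + beta a b')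
  (Hb3 : forall a r b, ZA a -> ZK r -> ZA b -> beta (a * iota r) b = beta a (iota r * b)).

Definition betap a b := beta (pA a) (pA b) + beta (u2 * epsA (dA a)) (dA b).

Lemma ZA_pA x : ZA (pA x).
Proof. by rewrite kerP d_pA. Qed.

Lemma ZA_dA x : ZA (dA x).
Proof. by rewrite kerP (dd HdA). Qed.

Lemma ZA_Zc a : ZA (u2 * epsA (dA a)).
Proof. by rewrite kerP Zc. Qed.

Lemma betap_addl a a' b : betap (a + a') b = betap a b + betap a' b.
Proof.
rewrite /betap pAD (dD HdA) (twistD HgA) mulrDr (Hb1 (ZA_pA a) (ZA_pA a') (ZA_pA b)).
rewrite (Hb1 (ZA_Zc a) (ZA_Zc a') (ZA_dA b)).
by rewrite addrACA.
Qed.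

Lemma betap_addr a b b' : betap a (b + b') = betap a b + betap a b'.
Proof.
rewrite /betap pAD (dD HdA) (Hb2 (ZA_pA a) (ZA_pA b) (ZA_pA b')).
rewrite (Hb2 (ZA_Zc a) (ZA_dA b) (ZA_dA b')).
by rewrite addrACA.
Qed.

Lemma betap_balZ a s b : dK s = 0 -> betap (a * iota s) b = betap a (iota s * b).
Proof.
move=> hs; have hs' := iota_cyc hs.
rewrite /betap pA_mulr // pA_mull // (d_mul_cyc_r HgA HdA _ hs') (d_mul_cyc_l HgA HdA _ hs').
rewrite Hb3 ?ZA_pA ?kerP ?hs //; congr (_ + _).
rewrite (twist_mul HgA) -iota_twist mulrA Hb3 ?ZA_Zc ?ZA_dA //.
by rewrite kerP (cyc_twist1 HgK HdK).
Qed.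

Lemma betap_balu a b : betap (a * u) b = betap a (u * b).
Proof.
rewrite /betap u_comm' pA_u (d_twist1 HgA HdA) mulrN opp_u2 pA_u !d_u.
rewrite (d_twist1 HgA HdA) mulrN opprK (twistD HgA) (twist11 HgA) (twist_mul HgA) eps_u.
rewrite (twist11 HgA) mulNr -/(pA a) -/(pA b) addrC; congr (_ + _).
rewrite u2_comm u2_iota Hb3 ?ZA_pA ?ZA_dA //.
by rewrite kerP yy_cyc.
Qed.

Lemma betap_bal a r b : betap (a * iota r) b = betap a (iota r * b).
Proof.
rewrite iota_split mulrDr mulrDl betap_addl betap_addr betap_balZ ?SK_pK //.
by rewrite mulrA betap_balZ ?(dd HdK) // betap_balu mulrA.
Qed.

End Beta.

Definition Fm (f : A -> A) : A -> A := fun x => f (pA x) + u * epsA (f (epsA (dA x))).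
Definition Rm (f : A -> A) : A -> A := fun x => if ZA x then pA (f x) else 0.

Local Notation glinZ := (glin piK piA ZK ZA iota).
Local Notation gendZ := (gend piK piA ZK ZA iota).
Local Notation glinA := (glin piK piA predT predT iota).
Local Notation gendA := (gend piK piA predT predT iota).

Lemma ZA_eps_dA x : ZA (epsA (dA x)).
Proof. by rewrite kerP (cyc_twist1 HgA HdA) // (dd HdA). Qed.

Section GlinZ.
Variables (n : int) (g : A -> A).
Hypothesis Hgl : glinZ n g.

Lemma gZD x z : ZA x -> ZA z -> g (x + z) = g x + g z.
Proof. by case: Hgl => _ _ H _ _; apply: H. Qed.

Lemma gZ0 : g 0 = 0.
Proof.
have h0 : ZA 0 by rewrite kerP (d0 HdA).
by apply: (addrI (g 0)); rewrite -gZD // !addr0.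
Qed.

Lemma gZN x : ZA x -> g (- x) = - g x.
Proof.
move=> hx; have hnx : ZA (- x) by rewrite kerP (dN HdA) (eqP hx) oppr0.
by apply/eqP; rewrite -addr_eq0 -gZD // addNr gZ0.
Qed.

Lemma gZsign a b x : ZA x -> g (ksign A a b * x) = ksign A a b * g x.
Proof. by rewrite /ksign; case: (_ && _) => /= hx; rewrite ?expr0 ?expr1 ?mul1r ?mulN1r // gZN. Qed.

Lemma gZZ x : ZA x -> ZA (g x).
Proof. by case: Hgl => _ H _ _ _; apply: H. Qed.

Lemma gZh k x : ZA x -> homog piA k x -> homog piA (k + n) (g x).
Proof. by case: Hgl => _ _ _ H _; apply: H. Qed.

Lemma gZlin p r x : ZK r -> homog piK p r -> ZA x -> g (iota r * x) = ksign A n p * (iota r * g x).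
Proof. by case: Hgl => _ _ _ _ H; apply: H. Qed.

Lemma gZout x : ~~ ZA x -> g x = 0.
Proof. by case: Hgl => H _ _ _ _; apply: H. Qed.

Lemma eps_g_eps z : dA z = 0 -> epsA (g (epsA z)) = ksign A n 1 * g z.
Proof.
pose P z := epsA (g (epsA z)) = ksign A n 1 * g z.
move: z; apply: (ZA_ind (P := P)).
- by rewrite /P (twist0 HgA) gZ0 (twist0 HgA) mulr0.
- move=> x z hx hz; rewrite /P (twistD HgA) gZD ?kerP ?(cyc_twist1 HgA HdA) //.
  by rewrite (twistD HgA) gZD ?kerP ?hx ?hz // mulrDr => -> ->.
move=> k x hx hk; have hx' : ZA x by rewrite kerP hx.
rewrite /P (twist_homog HgA _ hk) gZsign // (twist_ksign HgA) (twist_homog HgA _ (gZh hx' hk)).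
by rewrite ksignDr -mulrA ksignK ksignC.
Qed.

End GlinZ.


Section GlinZ2.
Variables (n : int) (g : A -> A).
Hypothesis Hgl : glinZ n g.

Lemma FmD x z : Fm g (x + z) = Fm g x + Fm g z.
Proof.
rewrite /Fm pAD (gZD Hgl) ?ZA_pA // (dD HdA) (twistD HgA) (gZD Hgl) ?ZA_eps_dA //.
by rewrite (twistD HgA) mulrDr addrACA.
Qed.

Lemma FmZ s p x : dK s = 0 -> homog piK p s ->
  Fm g (iota s * x) = ksign A n p * (iota s * Fm g x).
Proof.
move=> hs hp; have hs' := iota_cyc hs.
have hsk : ZK s by rewrite kerP hs.
rewrite /Fm pA_mull // (d_mul_cyc_l HgA HdA _ hs') (twist_mul HgA) (twist11 HgA).
rewrite (gZlin Hgl hsk hp (ZA_pA x)) (gZlin Hgl hsk hp (ZA_eps_dA x)).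
rewrite (twist_ksign HgA) (twist_mul HgA) (twist_homog HgA _ (iota_homog hp)).
rewrite !mulrDr; congr (_ + _).
rewrite ksign_pull; congr (_ * _).
rewrite -mulrA ksign_pull (mulrA u) u_comm (twist_homog HgA _ (iota_homog hp)).
by rewrite -!mulrA ksignK.
Qed.

Lemma Fmu w : Fm g (u * w) = ksign A n (-1) * (u * Fm g w).
Proof.
have hyy : ZK (y * y) by rewrite kerP yy_cyc.
rewrite /Fm pA_u d_u -/(pA w) u2_iota (gZlin Hgl hyy yy_homog (ZA_dA w)).
rewrite (eps_g_eps Hgl (d_pA w)) (eps_g_eps Hgl (dd HdA w)).
rewrite ksignC ksignm2 mul1r ksign_m1 mulrDr mulrDr addrC; congr (_ + _).
  by rewrite ksign_pull.
by rewrite ksign_pull ksign_pull mulrA ksignKM mul1r -u2_iota mulrA.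
Qed.

Lemma glinA_Fm : glinA n (Fm g).
Proof.
split.
- by [].
- by [].
- by move=> x z _ _; apply: FmD.
- move=> k x _ hk; rewrite /Fm; apply: (homogD HgA).
    by apply: (gZh Hgl (ZA_pA x)); apply: homog_pA.
  have -> : k + n = -1 + (k + 1 + n) by ring.
  apply: (homogM HgA u_homog); apply: (homog_twist HgA).
  apply: (gZh Hgl (ZA_eps_dA x)); apply: (homog_twist HgA); exact: (homog_d HdA).
move=> p r x _ hp _.
rewrite iota_split mulrDl FmD -mulrA Fmu.
rewrite (FmZ _ (SK_pK r) (homog_pK hp)) (FmZ _ (dd HdK r) (homog_d HdK hp)).
rewrite (ksign_pull n (p + 1) u) (mulrA (ksign A n (-1))) -ksignDr (_ : -1 + (p + 1) = p); last by ring.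
by rewrite -mulrDr mulrA mulrDl.
Qed.

End GlinZ2.

Lemma gend_Fm f : gendZ f -> gendA (Fm f).
Proof.
case=> k [dg [fs [H1 H2]]]; exists k, dg, (fun i => Fm (fs i)); split.
  by move=> i; apply: glinA_Fm.
move=> x; rewrite /Fm !H2 (twist_sum HgA) mulr_sumr -big_split /=.
by [].
Qed.

Lemma Fm_add f g : Fm (fun x => f x + g x) = (fun x => Fm f x + Fm g x).
Proof.
apply: functional_extensionality => x.
by rewrite /Fm (twistD HgA) mulrDr addrACA.
Qed.


Lemma Fm_az a b : dA a = 0 -> dA b = 0 -> Fm (azphi piA ZA a b) = azphi piA predT a b.
Proof.
move=> ha hb; apply: functional_extensionality => x.
rewrite /Fm /azphi /= ZA_pA ZA_eps_dA /=.
rewrite (twist_sum HgA) mulr_sumr -big_split; apply: eq_bigr => n _.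
rewrite [in RHS](decompA x) (twistD HgA) mulrDr mulrDl; congr (_ + _).
rewrite !(twist_mul HgA) (twist_1n1 HgA) (twist_homog HgA _ (homog_pi HgA n b)).
rewrite (twist_mull HgA n (dA x) u_homog).
rewrite -(mulrA (epsA a)) !ksign_pull (mulrA a u) u_comm' -!mulrA ksign_m1 ksignC.
by [].
Qed.

Lemma gend_Rm f : gendA f -> gendZ (Rm f).
Proof.
case=> k [dg [fs [H1 H2]]]; exists k, dg, (fun i => Rm (fs i)); split.
  move=> i; case: (H1 i) => _ _ Hadd Hhom Hlin; split.
  - by move=> x /negbTE h; rewrite /Rm h.
  - by move=> x hx; rewrite /Rm hx ZA_pA.
  - by move=> x z hx hz; rewrite /Rm hx hz (kerdD HdA hx hz) Hadd // pAD.
  - by move=> m x hx hm; rewrite /Rm hx; apply: homog_pA; apply: Hhom.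
  move=> p r x hr hp hx.
  have hr' : dK r = 0 by apply/eqP.
  have hrx : ZA (iota r * x) by rewrite kerP ZA_mul ?iota_cyc //; apply/eqP.
  by rewrite /Rm hrx hx (Hlin p r x) // pA_ksign pA_mull // iota_cyc.
move=> x; rewrite /Rm H2; case: (kerd dA x); first exact: pA_sum.
by rewrite big1.
Qed.

Lemma Rm_add f g : Rm (fun x => f x + g x) = (fun x => Rm f x + Rm g x).
Proof.
apply: functional_extensionality => x; rewrite /Rm.
by case: (kerd dA x); rewrite ?pAD ?addr0.
Qed.

Lemma pA3' z0 z1 w0 w1 t : dA z0 = 0 -> dA z1 = 0 -> dA w0 = 0 -> dA w1 = 0 -> dA t = 0 ->
  pA ((z0 + u * z1) * t * (w0 + u * w1)) = z0 * t * w0 + u2 * epsA z1 * epsA t * w1.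
Proof.
move=> h0 h1 h2 h3 ht.
rewrite mulrDl mulrDr !mulrDl !pAD.
have T1 : pA (z0 * t * w0) = z0 * t * w0 by rewrite pA_cyc // !ZA_mul.
have T2 : pA (z0 * t * (u * w1)) = 0.
  rewrite mulrA u_comm' -mulrA pA_u ZA_mul ?mulr0 //.
  by apply: (cyc_twist1 HgA HdA); apply: ZA_mul.
have T3 : pA (u * z1 * t * w0) = 0.
  by rewrite -!mulrA pA_u mulrA ZA_mul ?mulr0 // ZA_mul.
have T4 : pA (u * z1 * t * (u * w1)) = u2 * epsA z1 * epsA t * w1.
  have e : u * z1 * t * (u * w1) = u2 * (epsA (z1 * t) * w1).
    by rewrite -(mulrA u z1 t) mulrA -(mulrA u (z1 * t) u) u_comm' mulrA -/u2 -mulrA.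
  have hc : dA (epsA (z1 * t) * w1) = 0.
    by apply: ZA_mul => //; apply: (cyc_twist1 HgA HdA); apply: ZA_mul.
  by rewrite e pA_mull ?d_u2 // (pA_cyc hc) (twist_mul HgA) !mulrA.
by rewrite T1 T2 T3 T4 addr0 add0r.
Qed.

Lemma pA3 a t b : dA t = 0 ->
  pA (a * t * b) = pA a * t * pA b + u2 * epsA (dA a) * epsA t * dA b.
Proof.
move=> ht; rewrite {1}(decompA a) {1}(decompA b) pA3' //; by rewrite ?d_pA ?(dd HdA).
Qed.

Lemma Rm_az a b : Rm (azphi piA predT a b) =
  (fun x => azphi piA ZA (pA a) (pA b) x + azphi piA ZA (u2 * epsA (dA a)) (dA b) x).
Proof.
apply: functional_extensionality => x; rewrite /Rm.
case hx: (kerd dA x); last by rewrite /azphi hx addr0.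
have hx' : dA x = 0 by apply/eqP.
set sb := gsupp piA b.
have c1 : cover piA sb (pA b).
  by move=> k ks; rewrite pi_pA (cover_supp HgA (x:=b)) // pA0.
have u2s : uniq [seq n + 1 | n <- sb].
  by rewrite map_inj_uniq ?(uniq_supp HgA) // => i j /addIr.
have c2 : cover piA [seq n + 1 | n <- sb] (dA b).
  move=> k ks; rewrite -(subrK 1 k) -(d_pi HgA HdA) (cover_supp HgA (x:=b)) ?(d0 HdA) //.
  by apply: contra ks => kb; apply/mapP; exists (k - 1) => //; rewrite subrK.
rewrite (azphi_cover _ _ _ (uniq_supp HgA b) c1) (azphi_cover _ _ _ u2s c2) hx big_map.
rewrite /azphi /= pA_sum -big_split; apply: eq_bigr => n _.
rewrite pA3 ?(cyc_twist n hx') // pi_pA -(d_pi HgA HdA) (twist_1n HgA).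
by [].
Qed.

Lemma RmFm f : gendZ f -> Rm (Fm f) = f.
Proof.
case=> k [dg [fs [H1 H2]]]; apply: functional_extensionality => x; rewrite /Rm /Fm.
have f0 : f 0 = 0 by rewrite H2 big1 // => i _; apply: (gZ0 (H1 i)).
case hx: (kerd dA x); last first.
  by rewrite H2 big1 // => i _; apply: (gZout (H1 i)); rewrite hx.
have hx' : dA x = 0 by apply/eqP.
rewrite (pA_cyc hx') hx' (twist0 HgA) f0 (twist0 HgA) mulr0 addr0 pA_cyc //.
rewrite H2 (d_sum HdA) big1 // => i _; apply/eqP; rewrite -kerP.
exact: (gZZ (H1 i) hx).
Qed.


Lemma clause_tensor : tensor_end_iso piK piA (kerd dK) (kerd dA) iota.
Proof.
split.
- by move=> a b ha hb; apply: gend_azZ; apply/eqP.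
- split.
    by move=> a a' b _ _ _; apply: az_addl.
  by move=> a b b' _ _ _; apply: az_addr.
- by move=> a r b _ _ _; apply: az_bal.
move=> G beta Hb1 Hb2 Hb3.
case: Haz => _ _ _ _ [_ _ _ HU].
have [H [HH1 HH2 HH3]] := HU G (betap beta)
  (fun a a' b _ _ _ => betap_addl Hb1 a a' b)
  (fun a b b' _ _ _ => betap_addr Hb2 a b b')
  (fun a r b _ _ _ => betap_bal Hb1 Hb2 Hb3 a r b).
exists (fun f => H (Fm f)); split.
- by move=> f g hf hg; rewrite Fm_add; apply: HH1; apply: gend_Fm.
- move=> a b ha hb; have ha' : dA a = 0 by apply/eqP.
  have hb' : dA b = 0 by apply/eqP.
  have z0 : beta 0 0 = 0.
    have h0 : ZA 0 by rewrite kerP (d0 HdA).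
    by apply: (addrI (beta 0 0)); rewrite -Hb2 // !addr0.
  by rewrite Fm_az // HH2 // /betap (pA_cyc ha') (pA_cyc hb') ha' hb' (twist0 HgA) mulr0 z0 addr0.
move=> h' Hh1 Hh2 f hf.
have key : forall phi, gendA phi -> h' (Rm phi) = H phi.
  apply: (HH3 (fun phi => h' (Rm phi))).
    by move=> phi psi hphi hpsi; rewrite Rm_add; apply: Hh1; apply: gend_Rm.
  move=> a b _ _; rewrite Rm_az Hh1.
  - by rewrite !Hh2 ?ZA_pA ?ZA_Zc ?ZA_dA.
  - by apply: gend_azZ; [apply: d_pA | apply: d_pA].
  - by apply: gend_azZ; [apply: Zc | apply: (dd HdA)].
by rewrite -{1}(RmFm hf) key //; apply: gend_Fm.
Qed.

Lemma main_concl : graded_azumaya piK piA (kerd dK) (kerd dA) iota.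
Proof.
split.
- by split; [apply: clause_proj | apply: clause_faithful].
- exact: clause_cent.
- exact: clause_inj.
- exact: clause_centre.
- exact: clause_tensor.
Qed.

End Main.


Theorem proposition4p6 (K A : pzRingType) (piK : int -> K -> K) (piA : int -> A -> A)
  (dK : K -> K) (dA : A -> A) (iota : {rmorphism K -> A}) :
  is_grading piK -> is_grading piA ->
  dg_ring piK dK -> dg_ring piA dA ->
  graded_commutative piK ->
  acyclic dK ->
  dg_algebra_over piK piA dK dA iota ->
  (* dg-Azumaya of the second kind *)
  graded_azumaya piK piA predT predT iota ->
  (* dg-Azumaya of the first kind *)
  graded_azumaya piK piA (kerd dK) (kerd dA) iota.
Proof.
move=> HgK HgA HdK HdA _ Hac Halg Haz.
have [y0 hy0] := Hac 1 (d1 HgK HdK).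
apply: (main_concl HgK HgA HdK HdA Halg Haz (y := piK (-1) y0)).
- exact: (homog_pi HgK (-1) y0).
- by rewrite (d_pi HgK HdK) hy0 addNr; apply: (homog1 HgK).
Qed.
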